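(* Let $\mathcal{D}$ be any basic action theory (including (P1), (P2) and $(\star)$) with a sensing action $\mathit{obs}(z)$ sensing the fluent $f$, with likelihood axiom $l(\mathit{obs}(z),s) = u \equiv u = \mathit{Err}(z,f(s))$ and precondition axiom $\mathit{Poss}(\mathit{obs}(z),s)\equiv \mathit{true}$, where $\mathit{Err}(u_1,u_2)$ is an expression with only two free (numeric) variables, and where $\mathit{obs}(z)$ does not change the value of any fluent (it appears in no successor state axiom of any fluent). Let $\phi$ be any $\mathcal{L}$-formula mentioning only $f$, and let $u$ be the variable among $\vec x = (x_1,\ldots,x_n)$ corresponding to the values of $f$. Then $$\mathcal{D} \models \textit{Bel}(\phi, do(\mathit{obs}(z),S_0)) = \frac{\int_{\vec x}[P(\vec x,\phi\land f=u,S_0)\times \mathit{Err}(z,u)]}{\int_{\vec x}[P(\vec x, f=u, S_0)\times \mathit{Err}(z,u)]}.$$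
   Context: Situation calculus: a many-sorted language $\mathcal{L}$ with sorts action, situation, object; $do(a,s)$ is the successor of $s$ under action $a$, $do(\alpha,s)$ for a sequence $\alpha$ is iterated $do$; $S_0$ the actual initial situation; $\mathit{Init}(s) \doteq \neg\exists a,s'.\, s = do(a,s')$; $\iota$ ranges over initial situations. The fluents $f_1,\ldots,f_n$ (one of which is $f$) are all the fluents, take only a situation argument, and take values in $\mathbb{R}$; $i$ ranges over $1..n$. $\phi[s]$ restores situation argument $s$ in situation-suppressed $\phi$. $\langle z.\ \psi \to t\rangle = v$ abbreviates $[(\exists z\psi)\supset \forall z(\psi \supset v = t)] \land [(\neg\exists z\psi) \supset v = 0]$. Distinguished symbols: $\mathit{Poss}(a,s)$, $p(s',s)$ (density of $s'$ when in $s$), $l(a,s)$ (likelihood). A basic action theory consists of an initial theory containing (P1) $\forall \iota,s.\ p(s,\iota) \ge 0 \land (p(s,\iota) > 0 \supset \mathit{Init}(s))$ and $(\star)$ $[\forall \vec x\, \exists \iota \bigwedge_i f_i(\iota) = x_i] \land [\forall \iota,\iota'.\ \bigwedge_i f_i(\iota) = f_i(\iota') \supset \iota = \iota']$; precondition axioms; successor state axioms including (P2) $p(s',do(a,s)) = v \equiv \exists s''[s' = do(a,s'') \land \mathit{Poss}(a,s'') \land v = p(s'',s)\times l(a,s'')] \lor \neg\exists s''[s'=do(a,s'')\land \mathit{Poss}(a,s'')] \land v = 0$; likelihood axioms $l(A(\vec y),s)=v\equiv\psi_A(\vec y,v,s)$; foundational axioms. For a ground action sequence $\alpha$, $P(\vec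 x,\phi,do(\alpha,S_0)) \doteq \langle \iota.\ \bigwedge_i f_i(\iota) = x_i \land \phi[do(\alpha,\iota)] \to p(do(\alpha,\iota),do(\alpha,S_0))\rangle$ (with $\alpha$ empty giving $P(\vec x,\phi,S_0)$), and $\textit{Bel}(\phi,s) \doteq \frac{1}{\gamma}\int_{\vec x} P(\vec x,\phi,s)$ with $\gamma$ the numerator with $\phi$ replaced by $\mathit{true}$. Here $\int_{\vec x}$ is the logical abbreviation of the improper Riemann integral over $\mathbb{R}^n$ (built from second-order-defined finite sums and $\epsilon$-style limit formulas), and entailment is over $\mathbb{R}$-interpretations (structures where arithmetic, $e$, $\pi$, exponentiation and logarithms have their usual meaning over the reals). *)

(* Defs.v *)
From Stdlib Require Import Reals List Classical ClassicalEpsilon.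
From Coquelicot Require Import Coquelicot.
Open Scope R_scope.

(** * Semantic rendering of an R-interpretation of a basic action theory. *)

Record BAT : Type := {
  Sit : Type;
  Act : Type;
  do_ : Act -> Sit -> Sit;
  S0 : Sit;
  nfl : nat;
  fl : nat -> Sit -> R;            (* fluent f_(i+1) is [fl i], i < nfl *)
  p : Sit -> Sit -> R;
  l : Act -> Sit -> R;
  Poss : Act -> Sit -> Prop;

  do_inj : forall a1 a2 s1 s2, do_ a1 s1 = do_ a2 s2 -> a1 = a2 /\ s1 = s2;
  sit_ind : forall P : Sit -> Prop,
      (forall s, (~ exists a s', s = do_ a s') -> P s) ->
      (forall a s, P s -> P (do_ a s)) -> forall s, P s;
  S0_init : ~ exists a s', S0 = do_ a s';

  ax_P1 : forall iota s, (~ exists a s', iota = do_ a s') ->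
      p s iota >= 0 /\ (p s iota > 0 -> ~ exists a s', s = do_ a s');

  ax_star_ex : forall x : nat -> R, exists iota,
      (~ exists a s', iota = do_ a s') /\ (forall i, (i < nfl)%nat -> fl i iota = x i);
  ax_star_uniq : forall iota iota',
      (~ exists a s', iota = do_ a s') -> (~ exists a s', iota' = do_ a s') ->
      (forall i, (i < nfl)%nat -> fl i iota = fl i iota') -> iota = iota';

  ax_P2 : forall s' a s v,
      p s' (do_ a s) = v <->
      ((exists s'', s' = do_ a s'' /\ Poss a s'' /\ v = p s'' s * l a s'') \/
       ((~ exists s'', s' = do_ a s'' /\ Poss a s'') /\ v = 0))
}.

Arguments do_ {b}.
Arguments S0 {b}.
Arguments fl {b}.
Arguments p {b}.
Arguments l {b}.
Arguments Poss {b}.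


Definition Init {M : BAT} (s : Sit M) : Prop := ~ exists a s', s = do_ a s'.

Definition doseq {M : BAT} (alpha : list (Act M)) (s : Sit M) : Sit M :=
  fold_left (fun s a => do_ a s) alpha s.

(** The abbreviation <z. psi -> t>, as a (total) term: if some z satisfies
    psi, the value of t at such a z (unique when relevant), else 0. *)
Definition guarded {S : Type} (psi : S -> Prop) (t : S -> R) : R :=
  match excluded_middle_informative (exists z, psi z) with
  | left H => t (proj1_sig (constructive_indefinite_description psi H))
  | right _ => 0
  end.

Definition Pdens {M : BAT} (x : nat -> R) (phi : Sit M -> Prop)
    (alpha : list (Act M)) : R :=
  guarded (fun iota : Sit M => Init iota /\
             (forall i, (i < nfl M)%nat -> fl i iota = x i) /\
             phi (doseq alpha iota))
          (fun iota => p (doseq alpha iota) (doseq alpha S0)).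

Definition int_R (g : R -> R) : R :=
  real (Lim (fun u => RInt g (- u) u) p_infty).

Definition upd (x : nat -> R) (i : nat) (t : R) : nat -> R :=
  fun j => if Nat.eqb j i then t else x j.

Fixpoint iint_from (m : nat) (F : (nat -> R) -> R) (x : nat -> R) : R :=
  match m with
  | O => F x
  | S m' => int_R (fun t => iint_from m' F (upd x m' t))
  end.

Definition integral_Rn (n : nat) (F : (nat -> R) -> R) : R :=
  iint_from n F (fun _ => 0).

Definition Bel {M : BAT} (phi : Sit M -> Prop) (alpha : list (Act M)) : R :=
  / integral_Rn (nfl M) (fun x => Pdens x (fun _ => True) alpha) *
  integral_Rn (nfl M) (fun x => Pdens x phi alpha).

(* Main.v *)
Require Import Defs.
From Stdlib Require Import Reals List.
From Stdlib Require Import FunctionalExtensionality Classical ClassicalEpsilon PropExtensionality.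
From Coquelicot Require Import Coquelicot.
Open Scope R_scope.

Lemma guarded_eq {S : Type} (P : S -> Prop) (t : S -> R) (s0 : S) :
  P s0 -> (forall s, P s -> s = s0) -> guarded P t = t s0.
Proof.
  intros H0 Hu. unfold guarded.
  destruct (excluded_middle_informative (exists z, P z)) as [H|H].
  - destruct (constructive_indefinite_description P H) as [w Hw]. simpl.
    rewrite (Hu w Hw). reflexivity.
  - exfalso. apply H. exists s0. exact H0.
Qed.

Lemma guarded_none {S : Type} (P : S -> Prop) (t : S -> R) :
  ~ (exists z, P z) -> guarded P t = 0.
Proof.
  intros H. unfold guarded.
  destruct (excluded_middle_informative (exists z, P z)) as [H'|H'].
  - contradiction.
  - reflexivity.
Qed.

Theorem mainTheorem12 (M : BAT) (k : nat) (hk : (k < nfl M)%nat)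
  (obs : R -> Act M) (Err : R -> R -> R) (Q : R -> Prop)
  (H_lik : forall z s u, l (obs z) s = u <-> u = Err z (fl k s))
  (H_poss : forall z s, Poss (obs z) s <-> True)
  (H_frame : forall z s i, (i < nfl M)%nat -> fl i (do_ (obs z) s) = fl i s)
  (z : R) :
  Bel (fun s : Sit M => Q (fl k s)) (obs z :: nil) =
  integral_Rn (nfl M) (fun x =>
      Pdens x (fun s : Sit M => Q (fl k s) /\ fl k s = x k) nil * Err z (x k)) /
  integral_Rn (nfl M) (fun x =>
      Pdens x (fun s : Sit M => fl k s = x k) nil * Err z (x k)).
Proof.
  assert (Hpt : forall (Q' : R -> Prop) x,
    Pdens x (fun s : Sit M => Q' (fl k s)) (obs z :: nil) =
    Pdens x (fun s : Sit M => Q' (fl k s) /\ fl k s = x k) nil * Err z (x k)).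
  { intros Q' x. unfold Pdens. simpl.
    destruct (classic (exists iota : Sit M, Init iota /\
        (forall i, (i < nfl M)%nat -> fl i iota = x i) /\ Q' (fl k iota)))
      as [[iota [Hi [Hx Hq]]]|Hn].
    - assert (Hu : forall s : Sit M, Init s /\
          (forall i, (i < nfl M)%nat -> fl i s = x i) -> s = iota).
      { intros s [Hs Hsx]. apply (ax_star_uniq M); auto.
        intros i Hlt. rewrite Hsx, Hx; auto. }
      rewrite (guarded_eq _ _ iota).
      2:{ split; [exact Hi|split; [exact Hx|]]. rewrite H_frame; auto. }
      2:{ intros s [Hs [Hsx _]]. apply Hu; auto. }
      rewrite (guarded_eq _ _ iota).
      2:{ repeat split; auto. }
      2:{ intros s [Hs [Hsx _]]. apply Hu; auto. }
      apply (proj2 (ax_P2 M _ _ _ _)). left. exists iota.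
      split; [reflexivity|]. split; [apply (proj2 (H_poss z iota)); exact I|].
      f_equal. rewrite <- (Hx k hk).
      symmetry. apply (proj1 (H_lik z iota _)). reflexivity.
    - rewrite !guarded_none. ring.
      + intros [s [Hs [Hsx [Hq _]]]]. apply Hn. exists s. auto.
      + intros [s [Hs [Hsx Hq]]]. apply Hn. exists s.
        repeat split; auto. rewrite H_frame in Hq; auto. }
  unfold Bel.
  assert (E1 : (fun x => Pdens x (fun s : Sit M => Q (fl k s)) (obs z :: nil)) =
     (fun x => Pdens x (fun s : Sit M => Q (fl k s) /\ fl k s = x k) nil * Err z (x k))).
  { apply functional_extensionality. intro x. apply Hpt. }
  assert (E2 : (fun x => Pdens x (fun _ : Sit M => True) (obs z :: nil)) =
     (fun x => Pdens x (fun s : Sit M => fl k s = x k) nil * Err z (x k))).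
  { apply functional_extensionality. intro x.
    rewrite (Hpt (fun _ => True) x). f_equal. unfold Pdens.
    f_equal. apply functional_extensionality. intro s.
    apply propositional_extensionality. tauto. }
  rewrite E1, E2. unfold Rdiv. apply Rmult_comm.
Qed.
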